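(* Let $\mathbb{F}$ be any field and let $\Phi: M_n(\mathbb{F}) \to M_r(\mathbb{F})$ be a linear map preserving zero products. If $\Phi(I_n)$ is an idempotent, then there exist a nonnegative integer $k$ with $kn\le r$ and a nonsingular $S \in M_r(\mathbb{F})$ such that $$\Phi(I_n)\Phi(A) = \Phi(A)\Phi(I_n) = S\begin{pmatrix} I_k\otimes A & 0\\ 0 & 0_{r-kn}\end{pmatrix}S^{-1}\quad\text{for all } A\in M_n(\mathbb{F});$$ in particular $\Psi_1 := \Phi(I_n)\Phi(\cdot)$ is an algebra homomorphism. Moreover $\Psi_0 := (I_r - \Phi(I_n))\Phi(\cdot)$ is a linear map satisfying $\Psi_0(X)\Psi_0(Y) = 0$ for all $X,Y \in M_n(\mathbb{F})$, and $\Phi = \Psi_1 + \Psi_0$. If $\Phi(I_n) = I_r$, then $\Phi$ is a unital algebra homomorphism of the form $A \mapsto S(I_k\otimes A)S^{-1}$ (with $r = nk$).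
   Context: A map $\Phi$ preserves zero products if $\Phi(A)\Phi(B)=0$ whenever $AB=0$. An algebra homomorphism is a linear multiplicative map. $I_k\otimes A$ denotes the block diagonal matrix $A\oplus\cdots\oplus A$ with $k$ copies of $A$. *)

(* Defs.v *)
From HB Require Import structures.
From mathcomp Require Import all_boot all_order all_algebra.
Set Implicit Arguments. Unset Strict Implicit. Unset Printing Implicit Defensive.
Import GRing.Theory.
Local Open Scope ring_scope.

Lemma kron_mod_lt (k n : nat) (i : 'I_(k * n)) : (i %% n < n)%N.
Proof.
case: n i => [|n] [i /= Hi]; last by rewrite ltn_mod.
by rewrite muln0 in Hi.
Qed.

(* I_k (x) A : the k*n x k*n block diagonal matrix diag(A, ..., A), k copies.
   Entry (i, j) is A (i mod n) (j mod n) if i, j lie in the same n-block,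
   and 0 otherwise. *)
Definition kron_id {F : fieldType} (k n : nat) (A : 'M[F]_n) : 'M[F]_(k * n) :=
  \matrix_(i, j) if (i %/ n == j %/ n)%N
                 then A (Ordinal (kron_mod_lt i)) (Ordinal (kron_mod_lt j))
                 else 0.

Definition kron_block {F : fieldType} (k n r : nat) (H : (k * n <= r)%N)
    (A : 'M[F]_n) : 'M[F]_r :=
  castmx (subnKC H, subnKC H)
    (block_mx (kron_id k A) 0 0 (0 : 'M[F]_(r - k * n))).

Definition zero_prod_preserving {F : fieldType} (n r : nat)
    (Phi : 'M[F]_n -> 'M[F]_r) : Prop :=
  forall A B : 'M[F]_n, A *m B = 0 -> Phi A *m Phi B = 0.

Definition alg_hom {F : fieldType} (n r : nat) (Psi : 'M[F]_n -> 'M[F]_r) : Prop :=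
  linear Psi /\ forall A B : 'M[F]_n, Psi (A *m B) = Psi A *m Psi B.

(* Main.v *)
Require Import Defs.
From HB Require Import structures.
From mathcomp Require Import all_boot all_order all_algebra.
Set Implicit Arguments. Unset Strict Implicit. Unset Printing Implicit Defensive.
Import GRing.Theory.
Local Open Scope ring_scope.


Lemma lin0 (F : fieldType) m1 m2 m3 m4 (f : 'M[F]_(m1,m2) -> 'M[F]_(m3,m4)) :
  linear f -> f 0 = 0.
Proof. move=> Hf; have := Hf 1 0 0; rewrite !scale1r addr0 => H.
by apply: (@addrI _ (f 0)); rewrite addr0 -H. Qed.

Lemma linD (F : fieldType) m1 m2 m3 m4 (f : 'M[F]_(m1,m2) -> 'M[F]_(m3,m4)) :
  linear f -> forall x y, f (x + y) = f x + f y.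
Proof. by move=> Hf x y; have := Hf 1 x y; rewrite !scale1r. Qed.

Lemma linZ (F : fieldType) m1 m2 m3 m4 (f : 'M[F]_(m1,m2) -> 'M[F]_(m3,m4)) :
  linear f -> forall a x, f (a *: x) = a *: f x.
Proof. by move=> Hf a x; have := Hf a x 0; rewrite !addr0 (lin0 Hf) addr0. Qed.

Lemma linN (F : fieldType) m1 m2 m3 m4 (f : 'M[F]_(m1,m2) -> 'M[F]_(m3,m4)) :
  linear f -> forall x, f (- x) = - f x.
Proof. by move=> Hf x; rewrite -scaleN1r (linZ Hf) scaleN1r. Qed.

Lemma linB (F : fieldType) m1 m2 m3 m4 (f : 'M[F]_(m1,m2) -> 'M[F]_(m3,m4)) :
  linear f -> forall x y, f (x - y) = f x - f y.
Proof. by move=> Hf x y; rewrite (linD Hf) (linN Hf). Qed.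

Lemma linMn (F : fieldType) m1 m2 m3 m4 (f : 'M[F]_(m1,m2) -> 'M[F]_(m3,m4)) :
  linear f -> forall x (b : bool), f (x *+ b) = f x *+ b.
Proof. by move=> Hf x [|]; rewrite ?mulr1n ?mulr0n ?(lin0 Hf). Qed.

Lemma linS (F : fieldType) m1 m2 m3 m4 (f : 'M[F]_(m1,m2) -> 'M[F]_(m3,m4)) :
  linear f -> forall (I : Type) (s : seq I) (P : pred I) G,
  f (\sum_(i <- s | P i) G i) = \sum_(i <- s | P i) f (G i).
Proof. by move=> Hf I s P G; apply: (big_morph f (linD Hf) (lin0 Hf)). Qed.

Lemma lin_ext (F : fieldType) n m3 m4 (f g : 'M[F]_n -> 'M[F]_(m3,m4)) :
  linear f -> linear g -> (forall p q, f (delta_mx p q) = g (delta_mx p q)) ->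
  forall B, f B = g B.
Proof.
move=> Hf Hg H B; rewrite (matrix_sum_delta B) (linS Hf) (linS Hg).
apply: eq_bigr => i _; rewrite (linS Hf) (linS Hg); apply: eq_bigr => j _.
by rewrite (linZ Hf) (linZ Hg) H.
Qed.

Lemma lin_mulr (F : fieldType) m1 m2 m3 m4 m5 (f : 'M[F]_(m1,m2) -> 'M[F]_(m3,m4))
  (M : 'M[F]_(m4, m5)) : linear f -> linear (fun x => f x *m M).
Proof. by move=> Hf a x y; rewrite Hf mulmxDl scalemxAl. Qed.

Lemma lin_mull (F : fieldType) m1 m2 m3 m4 m5 (f : 'M[F]_(m1,m2) -> 'M[F]_(m3,m4))
  (M : 'M[F]_(m5, m3)) : linear f -> linear (fun x => M *m f x).
Proof. by move=> Hf a x y; rewrite Hf mulmxDr scalemxAr. Qed.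

Lemma lin_pre (F : fieldType) m1 m2 m3 m4 m5 (f : 'M[F]_(m1,m2) -> 'M[F]_(m3,m4))
  (M : 'M[F]_(m5, m2)) : linear f -> linear (fun x : 'M_(m1, m5) => f (x *m M)).
Proof. by move=> Hf a x y /=; rewrite mulmxDl -scalemxAl Hf. Qed.

Lemma lin_prel (F : fieldType) m1 m2 m3 m4 m5 (f : 'M[F]_(m1,m2) -> 'M[F]_(m3,m4))
  (M : 'M[F]_(m1, m5)) : linear f -> linear (fun x : 'M_(m5, m2) => f (M *m x)).
Proof. by move=> Hf a x y /=; rewrite mulmxDr -scalemxAr Hf. Qed.

Lemma key (F : fieldType) n r (Phi : 'M[F]_n -> 'M[F]_r) :
  linear Phi -> zero_prod_preserving Phi ->
  forall A B, Phi A *m Phi B = Phi (A *m B) *m Phi 1%:M.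
Proof.
move=> Hl Hz.
pose e i j := Phi (delta_mx i j).
have E1 : forall i j p q, j != p -> e i j *m e p q = 0.
  move=> i j p q jp; apply: Hz; by rewrite mul_delta_mx_cond (negbTE jp) mulr0n.
have E3 : forall i j l m, e i j *m e j m = e i l *m e l m.
  move=> i j l m; case: (eqVneq j l) => [-> //|jl].
  have := Hz (delta_mx i j - delta_mx i l) (delta_mx j m + delta_mx l m).
  rewrite mulmxBl !mulmxDr !mul_delta_mx_cond !eqxx (negbTE jl) (eq_sym l j) (negbTE jl).
  rewrite !mulr0n !mulr1n addr0 add0r subrr => /(_ erefl).
  rewrite (linB Hl) (linD Hl) mulmxBl !mulmxDr -/(e _ _) -/(e _ _) -/(e _ _) -/(e _ _).
  have lj : l != j by rewrite eq_sym.
  rewrite (E1 _ _ _ _ jl) (E1 _ _ _ _ lj).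
  by rewrite addr0 add0r => /eqP; rewrite subr_eq0 => /eqP.
have E4 : forall i q, e i q *m Phi 1%:M = e i q *m e q q.
  move=> i q; rewrite mx1_sum_delta (linS Hl) mulmx_sumr (bigD1 q) //= big1 ?addr0 //.
  by move=> s sq; apply: E1; rewrite eq_sym.
have Ea : forall i j B, e i j *m Phi B = Phi (delta_mx i j *m B) *m Phi 1%:M.
  move=> i j; apply: lin_ext.
  - exact: lin_mull.
  - exact: (lin_mulr _ (lin_prel _ Hl)).
  move=> p q; rewrite mul_delta_mx_cond; case: (eqVneq j p) => [<-|jp].
    by rewrite mulr1n E4 (E3 _ _ j).
  by rewrite mulr0n (lin0 Hl) mul0mx E1.
move=> A B; move: A; apply: lin_ext.
- exact: lin_mulr.
- exact: (lin_mulr _ (lin_pre _ Hl)).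
by move=> p q /=; rewrite Ea.
Qed.
Lemma kron_div_lt (k n : nat) (i : 'I_(k * n)) : (i %/ n < k)%N.
Proof.
case: n i => [|n] [i /= Hi]; first by rewrite muln0 in Hi.
by rewrite ltn_divLR.
Qed.

Definition divord k n (i : 'I_(k * n)) : 'I_k := Ordinal (kron_div_lt i).
Definition modord k n (i : 'I_(k * n)) : 'I_n := Ordinal (kron_mod_lt i).

Lemma mkidx_lt k n (a : 'I_k) (j : 'I_n) : (a * n + j < k * n)%N.
Proof.
apply: (@leq_trans (a.+1 * n)); first by rewrite mulSn addnC ltn_add2r.
by rewrite leq_mul2r ltn_ord orbT.
Qed.

Definition mkidx k n (a : 'I_k) (j : 'I_n) : 'I_(k * n) := Ordinal (mkidx_lt a j).

Lemma divord_mk k n (a : 'I_k) (j : 'I_n) : divord (mkidx a j) = a.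
Proof.
apply: val_inj => /=; have n0 : (0 < n)%N by case: j; case: n.
by rewrite divnMDl // divn_small ?addn0.
Qed.

Lemma modord_mk k n (a : 'I_k) (j : 'I_n) : modord (mkidx a j) = j.
Proof. by apply: val_inj => /=; rewrite modnMDl modn_small. Qed.

Lemma mk_divmod k n (m : 'I_(k * n)) : mkidx (divord m) (modord m) = m.
Proof. by apply: val_inj => /=; rewrite -divn_eq. Qed.

Lemma idx_eq k n (m m' : 'I_(k * n)) :
  (m == m') = (divord m == divord m') && (modord m == modord m').
Proof.
apply/eqP/andP => [-> //| [/eqP e1 /eqP e2]].
by rewrite -(mk_divmod m) -(mk_divmod m') e1 e2.
Qed.

Lemma kron_mul (F : fieldType) k n s (A : 'M[F]_n) (M : 'M[F]_(k * n, s)) m c :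
  (kron_id k A *m M) m c = \sum_(j < n) A (modord m) j * M (mkidx (divord m) j) c.
Proof.
rewrite mxE (bigID (fun m' => divord m' == divord m)) /=.
rewrite [X in _ + X]big1 ?addr0; last first.
  move=> m' /negbTE H; rewrite mxE.
  have -> : (m %/ n == m' %/ n)%N = false by rewrite eq_sym; exact: H.
  by rewrite mul0r.
rewrite (reindex_onto (fun j => mkidx (divord m) j) (@modord k n)) /=; last first.
  by move=> m' /eqP <-; rewrite mk_divmod.
apply: eq_big => [j|j _]; first by rewrite modord_mk eqxx divord_mk eqxx.
rewrite mxE; have -> : (m %/ n == (mkidx (divord m) j) %/ n)%N.
  by have := divord_mk (divord m) j => /(congr1 val) /= ->.
congr (A _ _ * _); apply: val_inj => //=.
by have := modord_mk (divord m) j => /(congr1 val) /= ->.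
Qed.

Lemma castmx_mulr (F : fieldType) m m' p q (e : m = m') (X : 'M[F]_(m, p)) (Y : 'M[F]_(p, q)) :
  castmx (e, erefl p) X *m Y = castmx (e, erefl q) (X *m Y).
Proof. by case: m' / e; rewrite !castmx_id. Qed.

Lemma castmx0 (F : fieldType) m n m' n' (e : (m = m') * (n = n')) :
  castmx e (0 : 'M[F]_(m, n)) = 0.
Proof. by apply/matrixP => i j; rewrite castmxE !mxE. Qed.

Lemma cast_conj (F : fieldType) m r (e : m = r) (T' : 'M[F]_(m, r)) (K : 'M[F]_m)
  (M : 'M[F]_r) : T' *m M = K *m T' ->
  castmx (e, erefl r) T' *m M = castmx (e, e) K *m castmx (e, erefl r) T'.
Proof. by move=> H; subst r; rewrite !castmx_id. Qed.

Lemma hom_struct (F : fieldType) n r (h : 'M[F]_n.+1 -> 'M[F]_r) (Hl : linear h)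
  (HM : forall A B, h (A *m B) = h A *m h B) :
  exists k (Hk : (k * n.+1 <= r)%N) (S : 'M[F]_r), S \in unitmx /\
    \rank (h 1%:M) = (k * n.+1)%N /\
    forall A, h A = S *m kron_block Hk A *m invmx S.
Proof.
set P := h 1%:M.
have hP : forall A, P *m h A = h A by move=> A; rewrite /P -HM mul1mx.
have Ph : forall A, h A *m P = h A by move=> A; rewrite /P -HM mulmx1.
have hdd : forall i j p q, h (delta_mx i j) *m h (delta_mx p q) = h (delta_mx i q) *+ (j == p).
  by move=> i j p q; rewrite -HM mul_delta_mx_cond (linMn Hl).
set B := row_base (h (delta_mx 0 0)).
set k := \rank (h (delta_mx 0 0)).
have BG : B *m h (delta_mx 0 0) = B.
  have /submxP [X ->] : (B <= h (delta_mx 0 0))%MS by rewrite eq_row_base.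
  by rewrite -mulmxA hdd eqxx mulr1n.
have [Binv HBinv] : exists Binv, B *m Binv = 1%:M by apply/row_freeP; exact: row_base_free.
pose Ttop : 'M_(k * n.+1, r) := \matrix_(m, c) (B *m h (delta_mx 0 (modord m))) (divord m) c.
pose R : 'M_(r, k * n.+1) := \matrix_(c, m) (h (delta_mx (modord m) 0) *m Binv) c (divord m).
have TR : Ttop *m R = 1%:M.
  apply/matrixP => m' m; rewrite !mxE.
  transitivity (((B *m h (delta_mx 0 (modord m'))) *m (h (delta_mx (modord m) 0) *m Binv)) (divord m') (divord m)).
    by rewrite mxE; apply: eq_bigr => c _; rewrite !mxE.
  rewrite mulmxA -(mulmxA B) hdd idx_eq; case: eqP => [_|_].
    by rewrite mulr1n BG HBinv andbT mxE.
  by rewrite mulr0n mulmx0 mul0mx andbF mxE.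
have Tfree : \rank Ttop = (k * n.+1)%N.
  by have /eqP : row_free Ttop by apply/row_freeP; exists R.
have Tsub : (Ttop <= P)%MS.
  have -> : Ttop = Ttop *m P.
    apply/matrixP => m c; rewrite [RHS]mxE.
    transitivity (((B *m h (delta_mx 0 (modord m))) *m P) (divord m) c).
      by rewrite -mulmxA Ph mxE.
    by rewrite mxE; apply: eq_bigr => c' _; rewrite !mxE.
  exact: submxMl.
have Psub : (P <= Ttop)%MS.
  rewrite /P mx1_sum_delta (linS Hl); apply: summx_sub => i _.
  have -> : h (delta_mx i i) = h (delta_mx i 0) *m h (delta_mx 0 0) *m h (delta_mx 0 i).
    by rewrite -!HM !mul_delta_mx.
  have /submxP [X ->] : (h (delta_mx i 0) *m h (delta_mx 0 0) <= B)%MS.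
    by rewrite eq_row_base submxMl.
  rewrite -mulmxA; apply: submx_trans (submxMl _ _) _.
  apply/row_subP => a.
  have -> : row a (B *m h (delta_mx 0 i)) = row (mkidx a i) Ttop.
    by apply/rowP => c; rewrite !mxE modord_mk divord_mk.
  exact: row_sub.
have rP : \rank P = (k * n.+1)%N.
  by rewrite -Tfree; apply/eqP; rewrite eqn_leq !mxrankS.
have Hk : (k * n.+1 <= r)%N by rewrite -Tfree rank_leq_col.
have Erk : \rank (kermx P) = (r - k * n.+1)%N by rewrite mxrank_ker rP.
pose Tbot := castmx (Erk, erefl r) (row_base (kermx P)).
have TbP : Tbot *m P = 0.
  rewrite /Tbot castmx_mulr.
  have -> : row_base (kermx P) *m P = 0 by apply/eqP; rewrite -sub_kermx eq_row_base.
  exact: castmx0.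
pose T' := col_mx Ttop Tbot.
pose T := castmx (subnKC Hk, erefl r) T'.
have Tu : T \in unitmx.
  rewrite -row_full_unit -sub1mx /T eqmx_cast -addsmxE -(subrK P 1%:M).
  apply: addmx_sub.
    apply: submx_trans (addsmxSr _ _).
    by rewrite /Tbot eqmx_cast eq_row_base sub_kermx mulmxBl mul1mx hP subrr.
  exact: submx_trans Psub (addsmxSl _ _).
have Heq : forall A, T' *m h A = block_mx (kron_id k A) 0 0 0 *m T'.
  move=> A; rewrite mul_col_mx mul_block_col !mul0mx !addr0.
  congr col_mx; last by rewrite -hP mulmxA TbP mul0mx.
  have rowA : forall i, (delta_mx 0 i : 'M_n.+1) *m A = \sum_j A i j *: (delta_mx 0 j : 'M_n.+1).
    move=> i; apply/matrixP => x y; rewrite !mxE summxE.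
    case: (eqVneq x 0) => [->|x0].
      rewrite (bigD1 i) //= big1 => [|z zi]; last by rewrite !mxE (negbTE zi) andbF mul0r.
      rewrite (bigD1 y) //= big1 => [|z zy]; last by rewrite !mxE (eq_sym y z) (negbTE zy) andbF mulr0.
      by rewrite !mxE !eqxx !addr0 mul1r mulr1.
    rewrite big1 => [|z _]; last by rewrite !mxE (negbTE x0) mul0r.
    by rewrite big1 // => z _; rewrite !mxE (negbTE x0) mulr0.
  apply/matrixP => m c; rewrite kron_mul.
  transitivity (((B *m h (delta_mx 0 (modord m))) *m h A) (divord m) c).
    rewrite [LHS]mxE [RHS]mxE. apply: eq_bigr => c' _. rewrite /Ttop mxE.
    done.
  rewrite -mulmxA -HM rowA (linS Hl) mulmx_sumr summxE.
  apply: eq_bigr => j _; rewrite (linZ Hl) -scalemxAr !mxE modord_mk divord_mk.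
  done.
exists k, Hk, (invmx T); split; first by rewrite unitmx_inv.
split; first exact: rP.
move=> A; rewrite invmxK /kron_block -mulmxA -(cast_conj (subnKC Hk) (Heq A)).
by rewrite mulKmx.
Qed.

Lemma exist_gen (F : fieldType) (n r : nat) (Phi : 'M[F]_n -> 'M[F]_r)
  (Hlin : linear Phi) (Hzp : zero_prod_preserving Phi)
  (Hidem : Phi 1%:M *m Phi 1%:M = Phi 1%:M) :
  exists k (Hk : (k * n <= r)%N) (S : 'M[F]_r), S \in unitmx /\
    \rank (Phi 1%:M) = (k * n)%N /\
    forall A, Phi 1%:M *m Phi A = S *m kron_block Hk A *m invmx S.
Proof.
have C : forall A, Phi 1%:M *m Phi A = Phi A *m Phi 1%:M.
  by move=> A; rewrite (key Hlin Hzp) mul1mx.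
case: n Phi Hlin Hzp Hidem C => [|n] Phi Hlin Hzp Hidem C.
  exists 0%N, (leq0n r), 1%:M; split; first exact: unitmx1.
  have E0 : forall A : 'M[F]_0, A = 0 by move=> A; exact: flatmx0.
  split; first by rewrite (E0 1%:M) (lin0 Hlin) mxrank0.
  move=> A; rewrite (E0 A) (lin0 Hlin) mulmx0 invmx1 mulmx1 mul1mx /kron_block.
  have -> : kron_id 0 (0 : 'M[F]_0) = 0 by apply/matrixP => -[].
  by rewrite block_mx0 castmx0.
set P := Phi 1%:M.
have HM : forall A B, P *m Phi (A *m B) = P *m Phi A *m (P *m Phi B).
  move=> A B; rewrite mulmxA -(mulmxA P (Phi A) P) -C mulmxA Hidem.
  by rewrite -mulmxA (key Hlin Hzp) -C mulmxA Hidem.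
have [k [Hk [S [Su [rk HS]]]]] := hom_struct (lin_mull P Hlin) HM.
exists k, Hk, S; split=> //; split=> //.
by rewrite -rk /= -/P Hidem.
Qed.

Theorem corollary3p4 (F : fieldType) (n r : nat) (Phi : 'M[F]_n -> 'M[F]_r)
  (Hlin : linear Phi) (Hzp : zero_prod_preserving Phi)
  (Hidem : Phi 1%:M *m Phi 1%:M = Phi 1%:M) :
  let Psi1 := fun A : 'M[F]_n => Phi 1%:M *m Phi A in
  let Psi0 := fun A : 'M[F]_n => (1%:M - Phi 1%:M) *m Phi A in
  (exists (k : nat) (Hk : (k * n <= r)%N) (S : 'M[F]_r),
     S \in unitmx /\
     (forall A : 'M[F]_n,
        Phi 1%:M *m Phi A = S *m kron_block Hk A *m invmx S /\
        Phi A *m Phi 1%:M = S *m kron_block Hk A *m invmx S) /\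
     (Phi 1%:M = 1%:M ->
        (k * n)%N = r /\
        (forall A : 'M[F]_n, Phi A = S *m kron_block Hk A *m invmx S) /\
        alg_hom Phi)) /\
  alg_hom Psi1 /\
  linear Psi0 /\
  (forall X Y : 'M[F]_n, Psi0 X *m Psi0 Y = 0) /\
  (forall A : 'M[F]_n, Phi A = Psi1 A + Psi0 A).
Proof.
move=> Psi1 Psi0.
set P := Phi 1%:M.
have C : forall A, P *m Phi A = Phi A *m P.
  by move=> A; rewrite (key Hlin Hzp) mul1mx.
have HM : forall A B, P *m Phi (A *m B) = P *m Phi A *m (P *m Phi B).
  move=> A B; rewrite mulmxA -(mulmxA P (Phi A) P) -C mulmxA Hidem.
  by rewrite -mulmxA (key Hlin Hzp) -C mulmxA Hidem.
have [k [Hk [S [Su [rk HS]]]]] := exist_gen Hlin Hzp Hidem.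
split.
  exists k, Hk, S; split=> //; split.
    by move=> A; split; [exact: HS | rewrite -C HS].
  move=> P1; split; first by rewrite -rk -/P P1 mxrank1.
  split; first by move=> A; rewrite -HS -/P P1 mul1mx.
  split=> // A B; by rewrite (key Hlin Hzp) -/P P1 mulmx1.
split; first by split; [exact: lin_mull | exact: HM].
split; first exact: lin_mull.
split.
  move=> X Y; rewrite /Psi0.
  have CQ : forall A, Phi A *m (1%:M - P) = (1%:M - P) *m Phi A.
    by move=> A; rewrite mulmxBr mulmxBl mulmx1 mul1mx C.
  have QP : (1%:M - P) *m P = 0 by rewrite mulmxBl mul1mx Hidem subrr.
  rewrite mulmxA -(mulmxA _ (Phi X)) CQ !mulmxA -(mulmxA _ (Phi X)) (key Hlin Hzp).
  by rewrite -C mulmxA -(mulmxA _ _ P) QP mulmx0 mul0mx.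
by move=> A; rewrite /Psi1 /Psi0 -mulmxDl addrC subrK mul1mx.
Qed.
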